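(* Let $h>0$ and let $L \in h\cdot(\tfrac12 + \mathbb{Z}_{>0})$. Let $Y$ be any random variable supported in $(-L, L]$, and let $\tilde{Y}$ be the output of $\mathsf{DiscretizeRV}$ applied to (the CDF of) $Y$ with mesh size $h$ and truncation parameter $L$. Then $\mathbb{E}[Y] = \mathbb{E}[\tilde{Y}]$, and there exists $\mu$ with $|\mu| \le \frac{h}{2}$ such that $|Y - \tilde{Y} - \mu| \le_{0} \frac{h}{2}$.
   Context: Procedure $\mathsf{DiscretizeRV}(Y, h, L)$: given the CDF of a random variable $Y$ supported in $(-L,L]$, a mesh size $h>0$ and $L \in h\cdot(\tfrac12+\mathbb{Z}_{>0})$, set $n = (L - h/2)/h$; for $i=-n,\dots,n$ set $q_i = \mathsf{CDF}_Y(ih + h/2) - \mathsf{CDF}_Y(ih - h/2)$; normalize $q \leftarrow q/\sum_{i=-n}^n q_i$; set $\mu_0 = \mathbb{E}[Y] - \sum_{i=-n}^n ih\, q_i$; output the random variable $\tilde{Y}$ that equals $ih + \mu_0$ with probability $q_i$ for $-n \le i \le n$. Coupling approximation: for random variables $A,B$, $h\ge 0$ and $\eta \ge 0$, we write $|A - B| \le_{\eta} h$ if there exists a coupling of $A$ and $B$ such that $\Pr[|A-B|>h] \le \eta$. *)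

(* Defs.v *)
From HB Require Import structures.
From mathcomp Require Import all_boot all_order all_algebra.
From mathcomp Require Import all_classical all_reals all_analysis.
Set Implicit Arguments. Unset Strict Implicit. Unset Printing Implicit Defensive.
Import Order.TTheory GRing.Theory Num.Theory.
Import numFieldNormedType.Exports.
Local Open Scope classical_set_scope.
Local Open Scope ring_scope.

Section Discretize.
Context {d : measure_display} {T : measurableType d} {R : realType}
  (P : probability T R) (X : {RV P >-> R}) (h L : R).

Definition cdfRV (t : R) : R := fine (P [set w | X w <= t]).

(* n = (L - h/2)/h  (a natural number under the hypothesis on L) *)
Definition discr_n : nat := Num.truncn ((L - h / 2) / h).

(* index j : 'I_(2n+1) stands for i = j - n in {-n, ..., n} *)
Definition discr_idx (j : 'I_(discr_n.*2.+1)) : R :=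
  (j%:R - discr_n%:R).

Definition discr_qraw (j : 'I_(discr_n.*2.+1)) : R :=
  cdfRV (discr_idx j * h + h / 2) - cdfRV (discr_idx j * h - h / 2).

Definition discr_q (j : 'I_(discr_n.*2.+1)) : R :=
  discr_qraw j / \sum_(k < discr_n.*2.+1) discr_qraw k.

Definition discr_mu0 : R :=
  fine ('E_P[X]) - \sum_(j < discr_n.*2.+1) discr_idx j * h * discr_q j.

(* support points ih + mu_0 of the output variable Ytilde *)
Definition discr_val (j : 'I_(discr_n.*2.+1)) : R :=
  discr_idx j * h + discr_mu0.

(* the law of Ytilde: Pr[Ytilde \in B] = sum_{i : ih + mu0 \in B} q_i *)
Definition discr_law (B : set R) : \bar R :=
  (\sum_(j < discr_n.*2.+1) discr_q j * \1_B (discr_val j))%:E.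

Definition discr_mean : R :=
  \sum_(j < discr_n.*2.+1) discr_val j * discr_q j.

End Discretize.

(* |A - B - mu| <=_eta eps : a coupling pi (a probability on R x R whose
   marginals are the laws lawA, lawB) with Pr[|A - B - mu| > eps] <= eta. *)
Definition coupling_approx {R : realType} (lawA lawB : set R -> \bar R)
  (mu eps eta : R) : Prop :=
  exists pi : probability (R * R)%type R,
    (forall A : set R, measurable A -> pi (A `*` setT) = lawA A) /\
    (forall B : set R, measurable B -> pi (setT `*` B) = lawB B) /\
    (pi [set z : R * R | (eps < `|z.1 - z.2 - mu|)%R] <= eta%:E)%E.

(* Main.v *)
Require Import Defs.
From HB Require Import structures.
From mathcomp Require Import all_boot all_order all_algebra.
From mathcomp Require Import all_classical all_reals all_analysis.
From mathcomp Require Import ring lra.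
From mathcomp Require Import measurable_realfun.
Import Order.TTheory GRing.Theory Num.Theory.
Import numFieldNormedType.Exports.
Local Open Scope classical_set_scope.
Local Open Scope ring_scope.

Lemma bigsetU_memP {U : Type} {I : eqType} (r : seq I) (Q : pred I)
    (F : I -> set U) x :
  (\big[setU/set0]_(i <- r | Q i) F i) x <-> exists i, [/\ i \in r, Q i & F i x].
Proof.
elim: r => [|a r IH].
  by rewrite big_nil; split => // -[i []].
rewrite big_cons; case: ifPn => Qa.
  split.
    case=> [Fa|].
      by exists a; rewrite mem_head.
    move=> /IH [i [ir Qi Fi]].
    by exists i; split=> //; rewrite in_cons ir orbT.
  move=> [i [+ Qi Fi]]; rewrite in_cons => /orP[/eqP <-|ir]; first by left.
  by right; apply/IH; exists i.
split.
  by move=> /IH [i [ir Qi Fi]]; exists i; split=> //; rewrite in_cons ir orbT.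
move=> [i [+ Qi Fi]]; rewrite in_cons => /orP[/eqP ai|ir].
  by move: Qa; rewrite -ai Qi.
by apply/IH; exists i.
Qed.

Section Disc.
Context {d : measure_display} {T : measurableType d} {R : realType}
  (P : probability T R) (X : {RV P >-> R}) (h L : R).

Local Notation m := (discr_n h L).*2.+1.

Definition cc (j : 'I_m) : R := discr_idx j * h.
Definition Aj (j : 'I_m) : set T := X @^-1` `]cc j - h / 2, cc j + h / 2].

Lemma mAj j : measurable (Aj j).
Proof. exact: measurable_funPTI (measurable_itv _). Qed.

Definition Gf (w : T) : R := \sum_(j < m) discr_val X j * \1_(Aj j) w.
Definition Gc (w : T) : R := \sum_(j < m) cc j * \1_(Aj j) w.

Lemma mGf : measurable_fun setT Gf.
Proof.
apply: measurable_sum => j.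
apply: measurable_realfun.measurable_funM => //.
exact: measurable_realfun.measurable_indic (mAj j).
Qed.

Lemma mGc : measurable_fun setT Gc.
Proof.
apply: measurable_sum => j.
apply: measurable_realfun.measurable_funM => //.
exact: measurable_realfun.measurable_indic (mAj j).
Qed.

Definition Zf (w : T) : R * R := (X w, Gf w).

Lemma mZf : measurable_fun setT Zf.
Proof. exact: measurable_fun_pair mGf. Qed.

HB.instance Definition _ := isMeasurableFun.Build _ _ _ _ Zf mZf.


Section Hyp.
Hypothesis h0 : 0 < h.
Variable k : nat.
Hypothesis hL : L = h * (2^-1 + k%:R).

Lemma discr_nE : discr_n h L = k.
Proof.
rewrite /discr_n hL.
have -> : (h * (2^-1 + k%:R) - h / 2) / h = k%:R.
  by field; rewrite gt_eqF.
by rewrite natrK.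
Qed.

Lemma mR : (m%:R : R) = 2 * k%:R + 1.
Proof. by rewrite discr_nE -addn1 -mul2n natrD natrM. Qed.

Lemma ccE (j : 'I_m) : cc j - h / 2 = - L + j%:R * h /\ cc j + h / 2 = - L + j.+1%:R * h.
Proof.
have e : ((discr_n h L)%:R : R) = k%:R by rewrite discr_nE.
rewrite /cc /discr_idx e -natr1; move: (nat_of_ord j) => jn.
by rewrite hL -addn1 natrD; split; field.
Qed.

Lemma AjE j w : Aj j w <-> - L + j%:R * h < X w <= - L + j.+1%:R * h.
Proof.
have [e1 e2] := ccE j.
by rewrite /Aj /= in_itv /= e1 e2.
Qed.

Lemma Aj_disj i j w : Aj i w -> Aj j w -> i = j.
Proof.
have key (a b : 'I_m) : (a < b)%N -> Aj a w -> Aj b w -> False.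
  move=> ab /AjE /andP[_ a2] /AjE /andP[b1 _].
  have : a.+1%:R * h <= b%:R * h by (apply: ler_wpM2r; [exact: ltW | rewrite ler_nat]).
  lra.
case: (ltngtP i j) => [ij|ji|/val_inj //] Ai Aj'.
- by case: (key _ _ ij Ai Aj').
- by case: (key _ _ ji Aj' Ai).
Qed.

Definition S := X @^-1` `]- L, L].

Lemma mS : measurable S.
Proof. exact: measurable_funPTI (measurable_itv _). Qed.

Lemma AjS j : Aj j `<=` S.
Proof.
move=> w /AjE /andP[w1 w2]; rewrite /S /= in_itv /=.
have j0 : 0 <= j%:R * h by apply: mulr_ge0; [exact: ler0n | exact: ltW].
have jm : j.+1%:R * h <= m%:R * h by rewrite ler_pM2r // ler_nat ltn_ord.
rewrite mR in jm.
apply/andP; split; first lra.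
have : L = h * (2^-1 + k%:R) by [].
lra.
Qed.

Lemma cover_aux r : forall y, - L < y <= - L + r%:R * h -> (r <= m)%N ->
  exists j : 'I_m, - L + j%:R * h < y <= - L + j.+1%:R * h.
Proof.
elim: r => [|r IH] y /andP[y1 y2] rm.
  by move: y1 y2; rewrite mul0r addr0 => y1 y2; lra.
case: (lerP y (- L + r%:R * h)) => [yle|ylt].
  by apply: IH; [rewrite y1 yle | exact: ltnW].
by exists (Ordinal rm) => /=; rewrite ylt y2.
Qed.

Lemma cover w : S w -> exists j, Aj j w.
Proof.
rewrite /S /= in_itv /= => /andP[w1 w2].
have [|j Hj] := @cover_aux m (X w) _ (leqnn _).
  by rewrite w1 /= mR; move: w2; rewrite hL; lra.
by exists j; apply/AjE.
Qed.

Definition p j := fine (P (Aj j)).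

Lemma PAj j : P (Aj j) = (p j)%:E.
Proof. by rewrite /p fineK//; apply: fin_num_measure; exact: mAj. Qed.

Lemma bigU (Q : pred 'I_m) :
  P (\big[setU/set0]_(j < m | Q j) Aj j) = (\sum_(j < m | Q j) p j)%:E.
Proof.
rewrite measure_bigsetU_ord_cond.
- by rewrite -sumEFin; apply: eq_bigr => j _; exact: PAj.
- by move=> j _; exact: mAj.
apply/trivIsetP => i j _ _ ij; apply/seteqP; split => w //= [Ai Aj'].
by move: ij; rewrite (Aj_disj _ _ _ Ai Aj') eqxx.
Qed.

Lemma S_big : S = \big[setU/set0]_(j < m) Aj j.
Proof.
apply/seteqP; split => w.
  move=> /cover [j Aw]; apply/bigsetU_memP; exists j; split=> //.
by move=> /bigsetU_memP [j [_ _ Aw]]; exact: AjS _ _ Aw.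
Qed.

Hypothesis HS : P [set w | - L < X w <= L] = 1%E.

Lemma PS1 : P S = 1%E.
Proof.
rewrite -HS; congr (P _); apply/seteqP; split => w; by rewrite /S /= in_itv.
Qed.

Lemma sum_p : \sum_(j < m) p j = 1.
Proof.
have := bigU predT; rewrite -S_big PS1 => /esym [].
by [].
Qed.

Lemma mle t : measurable [set w | X w <= t].
Proof.
have -> : [set w | X w <= t] = X @^-1` `]-oo, t].
  by apply/seteqP; split => w; rewrite /= in_itv.
exact: measurable_funPTI (measurable_itv _).
Qed.

Lemma qraw_p j : discr_qraw X j = p j.
Proof.
rewrite /discr_qraw /cdfRV.
have -> : [set w | X w <= discr_idx j * h + h / 2] =
    [set w | X w <= discr_idx j * h - h / 2] `|` Aj j.
  apply/seteqP; split => w /=.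
    move=> wle; case: (lerP (X w) (discr_idx j * h - h / 2)) => [l|g]; first by left.
    by right; rewrite /Aj /cc /= in_itv /= g wle.
  case=> [wle|]; last by rewrite /Aj /cc /= in_itv /= => /andP[].
  apply: (le_trans wle); rewrite lerD2l.
  have hh : 0 < h by []. lra.
rewrite (measureU P (mle _) (mAj j)); last first.
  apply/seteqP; split => w //= [wle]; rewrite /Aj /cc /= in_itv /= => /andP[w1 _].
  have := lt_le_trans w1 wle; by rewrite ltxx.
rewrite fineD.
- by rewrite /p addrAC subrr add0r.
- by apply: fin_num_measure; exact: mle.
- by apply: fin_num_measure; exact: mAj.
Qed.

Lemma q_p j : discr_q X j = p j.
Proof.
rewrite /discr_q (eq_bigr _ (fun i _ => qraw_p i)) sum_p divr1.
exact: qraw_p.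
Qed.

Lemma sum_q : \sum_(j < m) discr_q X j = 1.
Proof. by rewrite (eq_bigr _ (fun i _ => q_p i)) sum_p. Qed.

Lemma sum_indic (f : 'I_m -> R) j w : Aj j w ->
  \sum_(i < m) f i * \1_(Aj i) w = f j.
Proof.
move=> Aw; rewrite (bigD1 j)//= indicE mem_set// mulr1 big1 ?addr0// => i ij.
rewrite indicE memNset ?mulr0// => Ai.
by move: ij; rewrite (Aj_disj _ _ _ Ai Aw) eqxx.
Qed.

Lemma mean_eq : fine ('E_P[X]) = discr_mean X h L.
Proof.
rewrite /discr_mean /discr_val.
under eq_bigr do rewrite mulrDl.
rewrite big_split /= -mulr_sumr sum_q mulr1 /discr_mu0.
lra.
Qed.


Lemma PnS : P (~` S) = 0%E.
Proof. by rewrite probability_setC ?PS1 ?subee//; exact: mS. Qed.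

Lemma Gc_on j w : Aj j w -> Gc w = cc j.
Proof. exact: sum_indic. Qed.

Lemma Gf_on j w : Aj j w -> Gf w = discr_val X j.
Proof. exact: sum_indic. Qed.

Lemma D_bound w : S w -> `|X w - Gc w| <= h / 2.
Proof.
move=> /cover [j Aw]; rewrite (Gc_on _ _ Aw).
have hh : 0 < h by [].
move: Aw; rewrite /Aj /= in_itv /= => /andP[w1 w2].
rewrite ler_norml; apply/andP; split; lra.
Qed.

Lemma mu0_bound : `|discr_mu0 X h L| <= h / 2.
Proof.
have hh : 0 < h by [].
have intS : P.-integrable S (EFin \o X).
  apply: (le_integrable mS (g := EFin \o cst L)) => //.
    by apply/measurable_realfun.measurable_EFinP; exact: measurable_funP.
    move=> w; rewrite /S /= in_itv /= => /andP[w1 w2].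
    rewrite !lee_fin ler_norml (ger0_norm); last by move: w1 w2; lra.
    by apply/andP; split; lra.
  exact: finite_measure_integrable_cst mS.
have intT : P.-integrable setT (EFin \o X).
  apply/(negligible_integrable (N := ~` S)) => //.
  - exact: measurableC mS.
  - by apply/measurable_realfun.measurable_EFinP; exact: measurable_funP.
  - exact: PnS.
  by rewrite setTD setCK.
have E1 : ('E_P[X] = \int[P]_(w in S) (X w)%:E)%E.
  rewrite unlock (negligible_integral (N := ~` S)) //.
  - by rewrite setTD setCK.
  - exact: measurableC mS.
  - exact: PnS.
pose Dc w := X w - Gc w.
have mDc : measurable_fun S (EFin \o Dc : T -> \bar R).
  apply/measurable_realfun.measurable_EFinP; apply: measurable_realfun.measurable_funB.
    exact: measurable_funP.
  exact: measurable_funTS mGc.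
have intD : P.-integrable S (EFin \o Dc).
  apply: (le_integrable mS (g := EFin \o cst (h / 2))) => //.
    move=> w Sw; rewrite /= lee_fin (@ger0_norm _ (h / 2)); last by lra.
    exact: D_bound.
  exact: finite_measure_integrable_cst mS.
have Gc_eq w : ((Gc w)%:E = \sum_(j < m) (cc j)%:E * (\1_(Aj j) w)%:E)%E.
  by rewrite /Gc -sumEFin; apply: eq_bigr => j _; rewrite EFinM.
have intI j : P.-integrable S (fun w => (cc j)%:E * (\1_(Aj j) w)%:E)%E.
  apply: integrableZl; first exact: mS.
  apply: (@integrableS _ _ _ P setT S) => //; first exact: mS.
  exact: integrable_indic (mAj j).
have intG : P.-integrable S (EFin \o Gc).
  apply: (eq_integrable mS (fun w => \sum_(j < m) (cc j)%:E * (\1_(Aj j) w)%:E)%E).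
    by move=> w _; rewrite /= Gc_eq.
  apply: integrable_sum; first exact: mS.
  by move=> j _; exact: intI.
have IG : (\int[P]_(w in S) (Gc w)%:E = (\sum_(j < m) cc j * p j)%:E)%E.
  under eq_integral do rewrite Gc_eq.
  rewrite (integral_sum mS intI).
  rewrite -sumEFin; apply: eq_bigr => j _.
  rewrite (integralZl mS); last first.
    apply: (@integrableS _ _ _ P setT S) => //; first exact: mS.
    exact: integrable_indic (mAj j).
  rewrite (integral_indic _ mS (mAj j)).
  rewrite setIidl; last exact: AjS.
  by rewrite [in RHS]EFinM -(PAj j).
have ID : (\int[P]_(w in S) (X w)%:E =
    \int[P]_(w in S) (Dc w)%:E + \int[P]_(w in S) (Gc w)%:E)%E.
  rewrite -(integralD_EFin mS intD intG); apply: eq_integral => w _.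
  by rewrite /= /Dc -EFinD subrK.
have bD : (`|\int[P]_(w in S) (Dc w)%:E| <= (h / 2)%:E)%E.
  apply: (le_trans (le_abse_integral _ mS mDc)).
  have := @integral_le_bound _ _ _ P S (EFin \o Dc) (h / 2)%:E mS mDc.
  have PS1m : ((P : {measure set T -> \bar R}) S = 1)%E := PS1.
  rewrite PS1m mule1; apply.
    by rewrite lee_fin; lra.
  by apply: aeW => w Sw; rewrite /= lee_fin; exact: D_bound.
have finD := integrable_fin_num mS intD.
have -> : discr_mu0 X h L = fine (\int[P]_(w in S) (Dc w)%:E).
  have sq : \sum_(j < m) discr_idx j * h * discr_q X j = \sum_(j < m) cc j * p j.
    by apply: eq_bigr => j _; rewrite q_p.
  by rewrite /discr_mu0 E1 ID IG fineD // sq /= addrK.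
by move: bD; rewrite -(fineK finD) /= lee_fin.
Qed.


Lemma mpre (B : set R) : measurable B -> measurable (Gf @^-1` B).
Proof. by move=> mB; have := mGf measurableT _ mB; rewrite setTI. Qed.

Lemma law_eq (B : set R) : measurable B ->
  P (Gf @^-1` B) = discr_law X h L B.
Proof.
move=> mB.
have e : Gf @^-1` B = (Gf @^-1` B `&` S) `|` (Gf @^-1` B `&` ~` S).
  by rewrite -setIUr setUCr setIT.
have mU : P ((Gf @^-1` B `&` S) `|` (Gf @^-1` B `&` ~` S)) =
    (P (Gf @^-1` B `&` S) + P (Gf @^-1` B `&` ~` S))%E.
  apply: (measureU P (measurableI _ _ (mpre _ mB) mS)
    (measurableI _ _ (mpre _ mB) (measurableC mS))).
  by rewrite setIACA setICr setI0.
rewrite e mU.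
have z : P (Gf @^-1` B `&` ~` S) = 0%E.
  apply/eqP; rewrite eq_le measure_ge0 andbT -PnS.
  apply: (le_measure P); rewrite ?inE.
  - exact: measurableI (mpre _ mB) (measurableC mS).
  - exact: measurableC mS.
  by apply: subIsetr.
have -> : Gf @^-1` B `&` S = \big[setU/set0]_(j < m | discr_val X j \in B) Aj j.
  apply/seteqP; split => w.
    move=> [/= GB /cover [j Aw]]; apply/bigsetU_memP; exists j; split => //.
      exact: mem_index_enum.
    by rewrite inE -(Gf_on _ _ Aw).
  move=> /bigsetU_memP [j [_ vB Aw]]; split; last exact: AjS _ _ Aw.
  by rewrite /= (Gf_on _ _ Aw); move: vB; rewrite inE.
rewrite bigU.
rewrite (_ : P (Gf @^-1` B `&` ~` S) = 0%E) //.
rewrite adde0 /discr_law big_mkcond /=; congr (_%:E).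
apply: eq_bigr => j _; rewrite indicE q_p.
by case: (discr_val X j \in B); rewrite ?mulr1 ?mulr0.
Qed.

Lemma bad_sub : [set w | h / 2 < `|X w - Gf w - - discr_mu0 X h L|] `<=` ~` S.
Proof.
move=> w /= bad Sw; have [j Aw] := cover _ Sw.
have := D_bound _ Sw; rewrite (Gc_on _ _ Aw).
move: bad; rewrite (Gf_on _ _ Aw) /discr_val.
have -> : X w - (discr_idx j * h + discr_mu0 X h L) - - discr_mu0 X h L = X w - cc j.
  by rewrite /cc; ring.
by move=> /lt_le_trans H /H; rewrite ltxx.
Qed.

Lemma mbad (mu : R) : measurable [set w | h / 2 < `|X w - Gf w - mu|].
Proof.
have mf : measurable_fun setT (Num.norm \o (fun w => X w - Gf w - mu)).
  apply: measurableT_comp; first exact: normr_measurable.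
  apply: measurable_realfun.measurable_funB => //.
  apply: measurable_realfun.measurable_funB => //; exact: mGf.
have := mf measurableT _ (measurable_itv `]h / 2, +oo[); rewrite setTI.
by congr measurable; apply/seteqP; split => w; rewrite /= in_itv /= andbT.
Qed.

End Hyp.
End Disc.

Theorem proposition2p7 (d : measure_display) (T : measurableType d)
  (R : realType) (P : probability T R) (X : {RV P >-> R}) (h L : R) :
  0 < h ->
  (exists k : nat, (0 < k)%N /\ L = h * (2^-1 + k%:R)) ->
  P [set w | - L < X w <= L] = 1%E ->
  fine ('E_P[X]) = discr_mean X h L /\
  exists mu : R, `|mu| <= h / 2 /\
    coupling_approx (distribution P X) (discr_law X h L) mu (h / 2) 0.
Proof.
move=> h0 [k [_ hL]] HS.
split; first exact: (mean_eq _ _ _ _ h0 _ hL HS).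
exists (- discr_mu0 X h L); split.
  by rewrite normrN; exact: (mu0_bound _ _ _ _ h0 _ hL HS).
exists (distribution P (Zf P X h L)); split; [|split].
- move=> A mA; rewrite /distribution /pushforward; congr (P _).
  by apply/seteqP; split => w /=; [case|].
- move=> B mB; rewrite /distribution /pushforward -(law_eq _ _ _ _ h0 _ hL HS _ mB).
  by congr (P _); apply/seteqP; split => w /=; [case|].
- rewrite /distribution /pushforward /=.
  apply: (@le_trans _ _ (P (~` S P X L))); last by rewrite (PnS _ _ _ HS).
  apply: (le_measure P); rewrite ?inE.
  + exact: mbad.
  + exact: measurableC (mS P X L).
  move=> w H; apply: (bad_sub _ _ _ _ h0 _ hL); exact: H.
Qed.
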